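(* Let $\tau=(G,H,\eta,T)$ be folding data for a symmetric monoidal category $\mathcal{C}$ with strict $G$-action $\phi$ by strict monoidal autofunctors. Then for each $g\in G$ and each object $A$ of $\hat{\mathcal{C}}_{H,\eta}$ there is an isomorphism $\alpha_A^g:\phi_g(\mathrm{Fold}_\tau A)\to\mathrm{Fold}_\tau A$ in $\mathcal{C}$, namely $\alpha_A^g=\rho_A^g\circ\sigma_A^g$ where $\sigma_A^g$ is a composite of symmetry isomorphisms reordering tensor factors and $\rho_A^g=\bigotimes_{t\in T}\phi_t((\eta_A^{h_t})^{-1})$ for suitable $h_t\in H$, such that for every morphism $f:A\to B$ of $\hat{\mathcal{C}}_{H,\eta}$, $$\alpha_B^g\circ\phi_g(\mathrm{Fold}_\tau f)\circ(\alpha_A^g)^{-1}=\mathrm{Fold}_\tau f.$$ In other words, each $\phi_g$, applied to the folded category $\mathrm{FLD}_\tau(\mathcal{C})$, is naturally isomorphic to the identity on $\mathrm{FLD}_\tau(\mathcal{C})$.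
   Context: Setup: $\mathcal{C}$ is a symmetric monoidal category, $G$ a finite group, $\phi:G\to\mathrm{Aut}(\mathcal{C})$ a strict left action ($\phi_g\phi_h=\phi_{gh}$, $\phi_e=\mathrm{id}$) by strict monoidal autofunctors. For $H\le G$, $\eta=(\eta_A^h)$ is a family of isomorphisms $\eta_A^h:A\to\phi_hA$ ($A\in\mathrm{ob}\,\mathcal{C}$, $h\in H$) with $\phi_h(\eta_A^{h'})\circ\eta_A^h=\eta_A^{hh'}$ and $\eta^h_{A\otimes B}=\eta^h_A\otimes\eta^h_B$. $\hat{\mathcal{C}}_{H,\eta}$ is the category with objects the pairs $(A,(\eta_A^h)_{h\in H})$ and morphisms those $f:A\to B$ of $\mathcal{C}$ with $\phi_h(f)\circ\eta_A^h=\eta_B^h\circ f$ for all $h\in H$. Folding data is $\tau=(G,H,\eta,T)$ with $T$ a left transversal of $H$ in $G$ (one representative of each left coset $tH$), with a fixed ordering. The folding functor $\mathrm{Fold}_\tau:\hat{\mathcal{C}}_{H,\eta}\to\mathcal{C}$ sends $A\mapsto\bigotimes_{t\in T}\phi_tA$ and $f\mapsto\bigotimes_{t\in T}\phi_tf$. The folded category $\mathrm{FLD}_\tau(\mathcal{C})$ is the image subcategory of $\mathcal{C}$. For $g\in G$, $gT$ is another left transversal, and $h_t\in H$ is defined by: the representative of the coset $tH$ in $gT$ is $th_t$. *)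

(* Defs.v *)
From mathcomp Require Import all_boot all_fingroup.
Set Implicit Arguments. Unset Strict Implicit. Unset Printing Implicit Defensive.

(* Categories (hom-equality is Leibniz equality).                       *)
Record Category := {
  ob :> Type;
  hom : ob -> ob -> Type;
  cid : forall A, hom A A;
  comp : forall A B D, hom B D -> hom A B -> hom A D;
  comp_idl : forall A B (f : hom A B), comp (cid B) f = f;
  comp_idr : forall A B (f : hom A B), comp f (cid A) = f;
  comp_assoc : forall A B D E (f : hom D E) (g : hom B D) (h : hom A B),
      comp f (comp g h) = comp (comp f g) h }.
Arguments hom {c}.
Arguments cid {c}.
Arguments comp {c A B D}.

Declare Scope cat_scope.
Delimit Scope cat_scope with cat.
Notation "f \oc g" := (comp f g) (at level 50, left associativity) : cat_scope.
Local Open Scope cat_scope.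

Definition castm (C : Category) (A B : C) (e : A = B) : hom A B :=
  match e in _ = B return hom A B with erefl => cid A end.

Record SymMonCat := {
  smc_cat :> Category;
  tens : smc_cat -> smc_cat -> smc_cat;
  tensm : forall A A' B B', hom A A' -> hom B B' -> hom (tens A B) (tens A' B');
  tunit : smc_cat;
  tensm_id : forall A B, tensm (cid A) (cid B) = cid (tens A B);
  tensm_comp : forall A A' A'' B B' B'' (f : hom A A') (f' : hom A' A'')
      (g : hom B B') (g' : hom B' B''),
      tensm (f' \oc f) (g' \oc g) = tensm f' g' \oc tensm f g;
  assoc : forall A B D, hom (tens (tens A B) D) (tens A (tens B D));
  assoc_inv : forall A B D, hom (tens A (tens B D)) (tens (tens A B) D);
  lunit : forall A, hom (tens tunit A) A;
  lunit_inv : forall A, hom A (tens tunit A);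
  runit : forall A, hom (tens A tunit) A;
  runit_inv : forall A, hom A (tens A tunit);
  braid : forall A B, hom (tens A B) (tens B A);
  assoc_iso1 : forall A B D, assoc_inv A B D \oc assoc A B D = cid _;
  assoc_iso2 : forall A B D, assoc A B D \oc assoc_inv A B D = cid _;
  lunit_iso1 : forall A, lunit_inv A \oc lunit A = cid _;
  lunit_iso2 : forall A, lunit A \oc lunit_inv A = cid _;
  runit_iso1 : forall A, runit_inv A \oc runit A = cid _;
  runit_iso2 : forall A, runit A \oc runit_inv A = cid _;
  assoc_nat : forall A A' B B' D D' (f : hom A A') (g : hom B B') (h : hom D D'),
      assoc A' B' D' \oc tensm (tensm f g) h = tensm f (tensm g h) \oc assoc A B D;
  lunit_nat : forall A A' (f : hom A A'), lunit A' \oc tensm (cid tunit) f = f \oc lunit A;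
  runit_nat : forall A A' (f : hom A A'), runit A' \oc tensm f (cid tunit) = f \oc runit A;
  braid_nat : forall A A' B B' (f : hom A A') (g : hom B B'),
      braid A' B' \oc tensm f g = tensm g f \oc braid A B;
  pentagon : forall A B D E,
      assoc A B (tens D E) \oc assoc (tens A B) D E
      = tensm (cid A) (assoc B D E) \oc assoc A (tens B D) E
        \oc tensm (assoc A B D) (cid E);
  triangle : forall A B,
      tensm (cid A) (lunit B) \oc assoc A tunit B = tensm (runit A) (cid B);
  hexagon : forall A B D,
      assoc B D A \oc braid A (tens B D) \oc assoc A B D
      = tensm (cid B) (braid A D) \oc assoc B A D \oc tensm (braid A B) (cid D);
  braid_sym : forall A B, braid B A \oc braid A B = cid (tens A B) }.

Arguments tens {s}.
Arguments tensm {s A A' B B'}.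
Arguments tunit {s}.
Arguments assoc {s}.
Arguments assoc_inv {s}.
Arguments lunit {s}.
Arguments lunit_inv {s}.
Arguments runit {s}.
Arguments runit_inv {s}.
Arguments braid {s}.

Notation "A (x) B" := (tens A B) (at level 40, left associativity) : cat_scope.
Notation "f <x> g" := (tensm f g) (at level 40, left associativity) : cat_scope.

Record Functor (C : Category) := {
  Fob :> C -> C;
  Fmor : forall A B, hom A B -> hom (Fob A) (Fob B);
  Fmor_id : forall A, Fmor (cid A) = cid (Fob A);
  Fmor_comp : forall A B D (f : hom B D) (g : hom A B),
      Fmor (f \oc g) = Fmor f \oc Fmor g }.
Arguments Fmor {C} _ {A B} _.

(* strict monoidal: equalities of objects, and equalities of morphisms up to
   the canonical transports along these object equalities *)
Record strict_monoidal (C : SymMonCat) (F : Functor C) := {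
  sm_tens : forall A B : C, F (A (x) B) = F A (x) F B;
  sm_unit : F tunit = tunit;
  sm_tensm : forall A A' B B' (f : hom A A') (g : hom B B'),
      castm (sm_tens A' B') \oc Fmor F (f <x> g)
      = (Fmor F f <x> Fmor F g) \oc castm (sm_tens A B);
  sm_assoc : forall A B D : C,
      castm (etrans (sm_tens A (B (x) D)) (f_equal (tens (F A)) (sm_tens B D)))
        \oc Fmor F (assoc A B D)
      = assoc (F A) (F B) (F D)
        \oc castm (etrans (sm_tens (A (x) B) D)
                         (f_equal (fun X => X (x) F D) (sm_tens A B)));
  sm_lunit : forall A : C,
      Fmor F (lunit A)
      = lunit (F A) \oc castm (etrans (sm_tens tunit A)
                                     (f_equal (fun X => X (x) F A) sm_unit));
  sm_runit : forall A : C,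
      Fmor F (runit A)
      = runit (F A) \oc castm (etrans (sm_tens A tunit)
                                     (f_equal (fun X => F A (x) X) sm_unit)) }.

(* The group G is the whole finGroupType gT.                            *)
Local Open Scope group_scope.

Record StrictAction (gT : finGroupType) (C : SymMonCat) := {
  act :> gT -> Functor C;
  act_monoidal : forall g, strict_monoidal (act g);
  act1_ob : forall A : C, act 1 A = A;
  act1_mor : forall A B (f : hom A B),
      castm (act1_ob B) \oc Fmor (act 1) f = f \oc castm (act1_ob A);
  actM_ob : forall g h (A : C), act g (act h A) = act (g * h) A;
  actM_mor : forall g h A B (f : hom A B),
      castm (actM_ob g h B) \oc Fmor (act g) (Fmor (act h) f)
      = Fmor (act (g * h)) f \oc castm (actM_ob g h A) }.

Section Fold.
Variables (C : SymMonCat) (I : Type).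

Fixpoint foldobj (s : seq I) (F : I -> C) : C :=
  match s with
  | [::] => tunit
  | t :: s' => match s' with
               | [::] => F t
               | _ :: _ => F t (x) foldobj s' F
               end
  end.

Fixpoint foldmor (s : seq I) (F F' : I -> C) (f : forall t, hom (F t) (F' t))
  : hom (foldobj s F) (foldobj s F') :=
  match s return hom (foldobj s F) (foldobj s F') with
  | [::] => cid tunit
  | t :: s' =>
      match s' as s0 return hom (foldobj s0 F) (foldobj s0 F') ->
                            hom (foldobj (t :: s0) F) (foldobj (t :: s0) F') with
      | [::] => fun _ => f t
      | _ :: _ => fun r => f t <x> r
      end (foldmor s' f)
  end.
End Fold.

Inductive structural (C : SymMonCat) : forall A B : C, hom A B -> Prop :=
| st_id A : structural (cid A)
| st_cast A B (e : A = B) : structural (castm e)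
| st_braid A B : structural (braid A B)
| st_assoc A B D : structural (assoc A B D)
| st_assoc_inv A B D : structural (assoc_inv A B D)
| st_lunit A : structural (lunit A)
| st_lunit_inv A : structural (lunit_inv A)
| st_runit A : structural (runit A)
| st_runit_inv A : structural (runit_inv A)
| st_comp A B D (f : hom B D) (g : hom A B) :
    structural f -> structural g -> structural (f \oc g)
| st_tens A A' B B' (f : hom A A') (g : hom B B') :
    structural f -> structural g -> structural (f <x> g).

Definition left_transversal (gT : finGroupType) (H : {group gT}) (ts : seq gT) :=
  forall x : gT, count (fun t => x \in t *: H) ts = 1%N.

(* h_t : the representative of tH in the transversal gT is t * h_t *)
Definition hrep (gT : finGroupType) (H : {group gT}) (ts : seq gT) (g t : gT) : gT :=
  let gts := [seq g * u | u <- ts] in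
  t^-1 * nth 1 gts (find (fun u => u \in t *: H) gts).

Section Folding.
Variables (gT : finGroupType) (C : SymMonCat) (phi : StrictAction gT C)
          (H : {group gT}) (eta : forall (A : C) (h : gT), hom A (phi h A)).

Definition hat_mor (A B : C) (f : hom A B) : Prop :=
  forall h, h \in H -> Fmor (phi h) f \oc eta A h = eta B h \oc f.

Definition FoldOb (ts : seq gT) (A : C) : C := foldobj ts (fun t => phi t A).
Definition FoldMor (ts : seq gT) (A B : C) (f : hom A B)
  : hom (FoldOb ts A) (FoldOb ts B) :=
  foldmor ts (fun t => Fmor (phi t) f).
End Folding.

(* Main.v *)
Require Import Defs.
From mathcomp Require Import all_boot all_fingroup.
From Stdlib Require Import ProofIrrelevance FunctionalExtensionality.
Set Implicit Arguments. Unset Strict Implicit. Unset Printing Implicit Defensive.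
Local Open Scope cat_scope.

Section Cast.
Variable C : SymMonCat.

Lemma castm_pi (A B : C) (e e' : A = B) : castm e = castm e'.
Proof. by rewrite (proof_irrelevance _ e e'). Qed.

Lemma castm_refl (A : C) (e : A = A) : castm e = cid A.
Proof. by rewrite (proof_irrelevance _ e erefl). Qed.

Lemma castm_comp (A B D : C) (e1 : A = B) (e2 : B = D) :
  castm e2 \oc castm e1 = castm (etrans e1 e2).
Proof. destruct e2; destruct e1; rewrite /castm /=; apply: comp_idl. Qed.

Lemma castm_inv1 (A B : C) (e : A = B) : castm (esym e) \oc castm e = cid A.
Proof. by rewrite castm_comp castm_refl. Qed.
Lemma castm_inv2 (A B : C) (e : A = B) : castm e \oc castm (esym e) = cid B.
Proof. by rewrite castm_comp castm_refl. Qed.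

Lemma castm_tens (A A' B B' : C) (e1 : A = A') (e2 : B = B') (e : A (x) B = A' (x) B') :
  castm e1 <x> castm e2 = castm e.
Proof. destruct e1, e2. rewrite (castm_refl e) /castm /=. apply: tensm_id. Qed.

Definition cnat (A A' B B' : C) (f : hom A B) (f' : hom A' B') :=
  exists (ea : A = A') (eb : B = B'), castm eb \oc f = f' \oc castm ea.

Lemma cnatE (A A' B B' : C) (f : hom A B) (f' : hom A' B') :
  cnat f f' -> forall ea eb, castm eb \oc f = f' \oc castm ea.
Proof. by case=> ea' [eb' h] ea eb; rewrite (castm_pi ea ea') (castm_pi eb eb'). Qed.

Lemma cnat_refl (A B : C) (f : hom A B) : cnat f f.
Proof. exists erefl, erefl; rewrite /castm /= comp_idl comp_idr //. Qed.

Lemma cnat_trans (A A' A'' B B' B'' : C) (f : hom A B) (f' : hom A' B') (f'' : hom A'' B'') :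
  cnat f f' -> cnat f' f'' -> cnat f f''.
Proof.
case=> ea [eb h1] [ea' [eb' h2]]; exists (etrans ea ea'), (etrans eb eb').
by rewrite -!castm_comp -comp_assoc h1 comp_assoc h2 -comp_assoc.
Qed.

Lemma cnat_sym (A A' B B' : C) (f : hom A B) (f' : hom A' B') :
  cnat f f' -> cnat f' f.
Proof.
case=> ea [eb h]; exists (esym ea), (esym eb).
have: castm (esym eb) \oc (castm eb \oc f) \oc castm (esym ea)
   = castm (esym eb) \oc (f' \oc castm ea) \oc castm (esym ea) by rewrite h.
rewrite comp_assoc castm_inv1 comp_idl -!comp_assoc castm_inv2 comp_idr => -> //.
Qed.

Lemma cnat_tens (A A' B B' D D' E E' : C) (f : hom A B) (f' : hom A' B')
  (g : hom D E) (g' : hom D' E') :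
  cnat f f' -> cnat g g' -> cnat (f <x> g) (f' <x> g').
Proof.
case=> ea [eb h1] [ea' [eb' h2]].
exists (f_equal2 tens ea ea'), (f_equal2 tens eb eb').
by rewrite -(castm_tens eb eb' (f_equal2 tens eb eb')) -tensm_comp h1 h2 tensm_comp
  (castm_tens ea ea' (f_equal2 tens ea ea')).
Qed.

Lemma cnat_sm (F : Functor C) (sm : strict_monoidal F) (A A' B B' : C)
  (f : hom A A') (g : hom B B') : cnat (Fmor F (f <x> g)) (Fmor F f <x> Fmor F g).
Proof. by exists (sm_tens sm A B), (sm_tens sm A' B'); apply: sm_tensm. Qed.
End Cast.

Section Fold.
Variables (C : SymMonCat) (I : Type).

Lemma foldobj_pw (F F' : I -> C) l : (forall t, F t = F' t) -> foldobj l F = foldobj l F'.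
Proof.
move=> e; elim: l => [|x l IH] //.
case: l IH => [|y l] IH; first exact: e.
exact: (f_equal2 tens (e x) IH).
Qed.

Lemma foldmor_pw (F F' G G' : I -> C) (k : forall t, hom (F t) (G t))
  (k' : forall t, hom (F' t) (G' t)) l :
  (forall t, cnat (k t) (k' t)) -> cnat (foldmor l k) (foldmor l k').
Proof.
move=> h; elim: l => [|x l IH]; first exact: cnat_refl.
case: l IH => [|y l] IH; first exact: h.
exact: (cnat_tens (h x) IH).
Qed.

Lemma foldmor_map (J : Type) (f : I -> J) (K K' : J -> C) (k : forall j, hom (K j) (K' j)) l :
  cnat (foldmor l (fun t => k (f t))) (foldmor (map f l) k).
Proof.
elim: l => [|x l IH]; first exact: cnat_refl.
case: l IH => [|y l] IH; first exact: cnat_refl.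
exact: (cnat_tens (cnat_refl (k (f x))) IH).
Qed.

Lemma foldmor_act (Fn : Functor C) (sm : strict_monoidal Fn) (F G : I -> C)
  (k : forall t, hom (F t) (G t)) l :
  cnat (Fmor Fn (foldmor l k)) (foldmor l (fun t => Fmor Fn (k t))).
Proof.
elim: l => [|x l IH].
  exists (sm_unit sm), (sm_unit sm); rewrite /= Fmor_id comp_idr comp_idl //.
case: l IH => [|y l] IH; first exact: cnat_refl.
exact: (cnat_trans (cnat_sm sm _ _) (cnat_tens (cnat_refl _) IH)).
Qed.

Lemma foldmor_comp (F G J : I -> C) (k : forall t, hom (F t) (G t))
  (k' : forall t, hom (G t) (J t)) l :
  foldmor l k' \oc foldmor l k = foldmor l (fun t => k' t \oc k t).
Proof.
elim: l => [|x l IH]; first exact: comp_idl.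
case: l IH => [|y l] IH //=.
by rewrite -tensm_comp IH.
Qed.

Lemma foldmor_id (F : I -> C) l : foldmor l (fun t => cid (F t)) = cid _.
Proof.
elim: l => [|x l IH] //.
case: l IH => [|y l] IH //.
change (cid (F x) <x> foldmor (y::l) (fun t => cid (F t)) = cid _).
by rewrite IH tensm_id.
Qed.
End Fold.

Local Open Scope cat_scope.

Section Swap.
Variable C : SymMonCat.

Lemma assoc_inv_nat (A A' B B' D D' : C) (f : hom A A') (g : hom B B') (h : hom D D') :
  assoc_inv A' B' D' \oc (f <x> (g <x> h)) = ((f <x> g) <x> h) \oc assoc_inv A B D.
Proof.
have: assoc_inv A' B' D' \oc (f <x> (g <x> h)) \oc (assoc A B D \oc assoc_inv A B D)
    = assoc_inv A' B' D' \oc (assoc A' B' D' \oc ((f <x> g) <x> h)) \oc assoc_inv A B D.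
  by rewrite assoc_nat !comp_assoc.
by rewrite assoc_iso2 comp_idr comp_assoc assoc_iso1 comp_idl => ->.
Qed.

Definition swap3 (X Y R : C) : hom (X (x) (Y (x) R)) (Y (x) (X (x) R)) :=
  assoc Y X R \oc (braid X Y <x> cid R) \oc assoc_inv X Y R.

Lemma swap3_inv (X Y R : C) : swap3 Y X R \oc swap3 X Y R = cid _.
Proof.
rewrite /swap3 -!comp_assoc (comp_assoc (assoc_inv Y X R)) assoc_iso1 comp_idl.
rewrite (comp_assoc (braid Y X <x> cid R)) -tensm_comp braid_sym comp_idl tensm_id comp_idl.
exact: assoc_iso2.
Qed.

Lemma swap3_nat (X X' Y Y' R R' : C) (f : hom X X') (g : hom Y Y') (h : hom R R') :
  swap3 X' Y' R' \oc (f <x> (g <x> h)) = (g <x> (f <x> h)) \oc swap3 X Y R.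
Proof.
have E : ((g <x> f) \oc braid X Y) <x> h = ((g <x> f) <x> h) \oc (braid X Y <x> cid R).
  by rewrite -tensm_comp comp_idr.
rewrite /swap3 -!comp_assoc assoc_inv_nat (comp_assoc (braid X' Y' <x> cid R')) -tensm_comp.
rewrite braid_nat comp_idl E !comp_assoc assoc_nat //.
Qed.

Lemma structural_swap3 (X Y R : C) : structural (swap3 X Y R).
Proof. repeat constructor. Qed.
End Swap.

Section Perm.
Variables (C : SymMonCat) (I : eqType).

Definition Piso (l1 l2 : seq I) :=
  size l1 = size l2 /\
  exists (P : forall K : I -> C, hom (foldobj l1 K) (foldobj l2 K))
         (Q : forall K : I -> C, hom (foldobj l2 K) (foldobj l1 K)),
    (forall K, structural (P K) /\ P K \oc Q K = cid _ /\ Q K \oc P K = cid _) /\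
    (forall K K' (k : forall t, hom (K t) (K' t)), P K' \oc foldmor l1 k = foldmor l2 k \oc P K).

Lemma Piso_refl l : Piso l l.
Proof.
split=> //; exists (fun K => cid _), (fun K => cid _); split.
  by move=> K; split; [constructor | split; apply: comp_idl].
by move=> K K' k; rewrite comp_idl comp_idr.
Qed.

Lemma Piso_trans l1 l2 l3 : Piso l1 l2 -> Piso l2 l3 -> Piso l1 l3.
Proof.
case=> s1 [P1 [Q1 [h1 n1]]] [s2 [P2 [Q2 [h2 n2]]]]; split; first by rewrite s1.
exists (fun K => P2 K \oc P1 K), (fun K => Q1 K \oc Q2 K); split.
  move=> K; case: (h1 K) => st1 [i1 j1]; case: (h2 K) => st2 [i2 j2].
  split; first exact: st_comp.
  split.
    by rewrite -comp_assoc (comp_assoc (P1 K)) i1 comp_idl.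
  by rewrite -comp_assoc (comp_assoc (Q2 K)) j2 comp_idl.
move=> K K' k; by rewrite -comp_assoc n1 comp_assoc n2 -comp_assoc.
Qed.

Lemma Piso_cons x l1 l2 : Piso l1 l2 -> Piso (x :: l1) (x :: l2).
Proof.
case: l1 => [|a l1]; case: l2 => [|b l2] [s [P [Q [h n]]]] //; first exact: Piso_refl.
split; first by move: s => /= [->].
exists (fun K => (cid (K x) <x> P K : hom (foldobj (x :: a :: l1) K) (foldobj (x :: b :: l2) K))).
exists (fun K => (cid (K x) <x> Q K : hom (foldobj (x :: b :: l2) K) (foldobj (x :: a :: l1) K))).
split.
  move=> K; case: (h K) => st [i j]; split; first by constructor; [constructor|].
  by split; rewrite -tensm_comp comp_idl ?i ?j tensm_id.
move=> K K' k.
change ((cid (K' x) <x> P K') \oc (k x <x> foldmor (a :: l1) k)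
   = (k x <x> foldmor (b :: l2) k) \oc (cid (K x) <x> P K)).
by rewrite -!tensm_comp n comp_idl comp_idr.
Qed.

Lemma Piso_swap x y l : Piso [:: x, y & l] [:: y, x & l].
Proof.
split=> //; case: l => [|c l].
  exists (fun K => (braid (K x) (K y) : hom (foldobj [:: x; y] K) (foldobj [:: y; x] K))).
  exists (fun K => (braid (K y) (K x) : hom (foldobj [:: y; x] K) (foldobj [:: x; y] K))).
  split; first by move=> K; split; [constructor | split; apply: braid_sym].
  move=> K K' k; exact: braid_nat.
exists (fun K => (swap3 (K x) (K y) (foldobj (c :: l) K)
   : hom (foldobj [:: x, y, c & l] K) (foldobj [:: y, x, c & l] K))).
exists (fun K => (swap3 (K y) (K x) (foldobj (c :: l) K)
   : hom (foldobj [:: y, x, c & l] K) (foldobj [:: x, y, c & l] K))).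
split; first by move=> K; split; [apply: structural_swap3 | split; apply: swap3_inv].
move=> K K' k; exact: swap3_nat.
Qed.

Lemma Piso_front (a b : seq I) x : Piso (a ++ x :: b) (x :: a ++ b).
Proof.
elim: a => [|y a IH] /=; first exact: Piso_refl.
exact: (Piso_trans (Piso_cons y IH) (Piso_swap _ _ _)).
Qed.

Lemma perm_Piso (l1 l2 : seq I) : perm_eq l1 l2 -> Piso l1 l2.
Proof.
elim: l2 l1 => [|x l2 IH] l1 hp.
  by move: (perm_size hp) => /size0nil ->; apply: Piso_refl.
have xin: x \in l1 by rewrite (perm_mem hp) mem_head.
move: hp; case/splitPr: xin => a b hp.
apply: (Piso_trans (Piso_front a b x)); apply: Piso_cons; apply: IH.
by rewrite -(perm_cons x) -(perm_catCA a [:: x] b).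
Qed.
End Perm.

Local Open Scope group_scope.

Section Grp.
Variables (gT : finGroupType) (H : {group gT}) (ts : seq gT) (g : gT).
Hypothesis hts : left_transversal H ts.

Let gts := [seq g * u | u <- ts].

Lemma memgts x : (x \in [seq g * u | u <- ts]) = (g^-1 * x \in ts).
Proof.
apply/mapP/idP => [[u uin ->]|xin]; first by rewrite mulKg.
by exists (g^-1 * x); rewrite ?mulKVg.
Qed.

Lemma has_coset t : has (fun u => u \in t *: H) gts.
Proof.
have : 0 < count (fun u => g^-1 * t \in u *: H) ts by rewrite hts.
rewrite -has_count => /hasP [u uin hu]; apply/hasP; exists (g * u); first exact: map_f.
by rewrite lcoset_sym mem_lcoset invMg -mulgA -mem_lcoset.
Qed.

Lemma hrepH t : hrep H ts g t \in H.
Proof. by rewrite /hrep -mem_lcoset; exact: (nth_find 1 (has_coset t)). Qed.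

Lemma count1_eq (T : eqType) (p : pred T) (s : seq T) a b :
  count p s = 1%N -> a \in s -> b \in s -> p a -> p b -> a = b.
Proof.
rewrite -size_filter => hs ain bin pa pb.
have: a \in filter p s by rewrite mem_filter pa ain.
have: b \in filter p s by rewrite mem_filter pb bin.
by case: (filter p s) hs => [|c [|d l]] // _; rewrite !inE => /eqP -> /eqP ->.
Qed.

Lemma uniq_coset (s : seq gT) : (forall x, count (fun u => x \in u *: H) s <= 1) -> uniq s.
Proof.
elim: s => [|y s IH] //= h; apply/andP; split.
  apply/negP => yin; have := h y; rewrite /= lcoset_refl /= ltnS leqn0 => /eqP hc.
  have : 0 < count (fun u => y \in u *: H) s by rewrite -has_count; apply/hasP; exists y => //; exact: lcoset_refl.
  by rewrite hc.
apply: IH => x; apply: leq_trans (h x); rewrite /=; exact: leq_addl.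
Qed.

Lemma perm_hrep : perm_eq [seq g * u | u <- ts] [seq t * hrep H ts g t | t <- ts].
Proof.
have uts : uniq ts by apply: uniq_coset => x; rewrite hts.
have ug : uniq gts by rewrite map_inj_uniq //; exact: mulgI.
have rE t : t * hrep H ts g t = nth 1 gts (find (fun u => u \in t *: H) gts) by rewrite /hrep mulKVg.
have rin t : t * hrep H ts g t \in t *: H by rewrite rE; exact: (nth_find 1 (has_coset t)).
have ur : uniq [seq t * hrep H ts g t | t <- ts].
  rewrite map_inj_in_uniq // => t1 t2 t1in t2in e.
  apply: (count1_eq (hts (t1 * hrep H ts g t1))) => //.
  by rewrite e; exact: rin.
have sub : {subset [seq t * hrep H ts g t | t <- ts] <= gts}.
  move=> x /mapP [t _ ->]; rewrite rE; apply: mem_nth; rewrite -has_find; exact: has_coset.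
have sz : size gts <= size [seq t * hrep H ts g t | t <- ts] by rewrite !size_map.
have [_ em] := uniq_min_size ur sub sz.
by apply: uniq_perm => // x; rewrite em.
Qed.
End Grp.

Unset Implicit Arguments.
Local Open Scope cat_scope.
Local Open Scope group_scope.

Lemma cnat_src {C : SymMonCat} {A A' B B' : C} {f : hom A B} {f' : hom A' B'} :
  cnat f f' -> A = A'.
Proof. by case=> ea _. Qed.

Lemma cnat_actM {gT : finGroupType} {C : SymMonCat} (phi : StrictAction gT C)
  g h {A B : C} (f : hom A B) :
  cnat (Fmor (phi g) (Fmor (phi h) f)) (Fmor (phi (g * h)) f).
Proof. exists (actM_ob phi g h A), (actM_ob phi g h B); exact: actM_mor. Qed.

Theorem mainTheorem3 (gT : finGroupType) (C : SymMonCat)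
  (phi : StrictAction gT C) (H : {group gT})
  (eta : forall (A : C) (h : gT), hom A (phi h A))
  (etainv : forall (A : C) (h : gT), hom (phi h A) A)
  (eta_iso1 : forall A h, h \in H -> etainv A h \oc eta A h = cid A)
  (eta_iso2 : forall A h, h \in H -> eta A h \oc etainv A h = cid (phi h A))
  (eta_cocycle : forall A h h', h \in H -> h' \in H ->
      castm (actM_ob phi h h' A) \oc Fmor (phi h) (eta A h') \oc eta A h
      = eta A (h * h'))
  (eta_tens : forall (A B : C) h, h \in H ->
      castm (sm_tens (act_monoidal phi h) A B) \oc eta (A (x) B) h
      = eta A h <x> eta B h)
  (ts : seq gT) (hts : left_transversal H ts) :
  forall g : gT,
  exists (alpha : forall A : C, hom (phi g (FoldOb phi ts A)) (FoldOb phi ts A))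
         (alphainv : forall A : C, hom (FoldOb phi ts A) (phi g (FoldOb phi ts A))),
    (forall A, alpha A \oc alphainv A = cid _ /\ alphainv A \oc alpha A = cid _) /\
    (forall A : C,
       exists sigma : hom (phi g (FoldOb phi ts A))
                          (foldobj ts (fun t => phi t (phi (hrep H ts g t) A))),
         structural sigma /\
         alpha A = foldmor ts (fun t => Fmor (phi t) (etainv A (hrep H ts g t)))
                   \oc sigma) /\
    (forall (A B : C) (f : hom A B), @hat_mor gT C phi H eta A B f ->
       alpha B \oc Fmor (phi g) (FoldMor phi ts f) \oc alphainv A
       = FoldMor phi ts f).
Proof.
move=> g.
set hr := fun t => hrep H ts g t.
set r := fun t => t * hr t.
have c1 : forall (A B : C) (f : hom A B),
    cnat (Fmor (phi g) (FoldMor phi ts f)) (foldmor (map (fun u => g * u) ts) (fun x => Fmor (phi x) f)).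
  move=> A B f.
  apply: (cnat_trans (foldmor_act (act_monoidal phi g) _ ts)).
  apply: (cnat_trans (foldmor_pw ts (fun u => cnat_actM phi g u f))).
  exact: (foldmor_map (fun u => g * u) (fun x => Fmor (phi x) f) ts).
have c2 : forall (A B : C) (f : hom A B),
    cnat (foldmor (map r ts) (fun x => Fmor (phi x) f))
         (foldmor ts (fun t => Fmor (phi t) (Fmor (phi (hr t)) f))).
  move=> A B f; apply: cnat_sym.
  apply: (cnat_trans (foldmor_pw ts (fun t => cnat_actM phi t (hr t) f))).
  exact: (foldmor_map r (fun x => Fmor (phi x) f) ts).
pose e1 A := cnat_src (c1 A A (cid A)).
pose e2 A := cnat_src (c2 A A (cid A)).
have [_ [P [Q [hPQ nP]]]] := perm_Piso C (perm_hrep g hts).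
pose K (A : C) := fun x : gT => phi x A.
pose sigma A := castm (e2 A) \oc P (K A) \oc castm (e1 A).
pose sigmainv A := castm (esym (e1 A)) \oc Q (K A) \oc castm (esym (e2 A)).
pose rho A := foldmor ts (fun t => Fmor (phi t) (etainv A (hr t))).
pose rhoinv A := foldmor ts (fun t => Fmor (phi t) (eta A (hr t))).
have hrH t : hr t \in H by exact: hrepH.
have siso1 A : sigma A \oc sigmainv A = cid _.
  case: (hPQ (K A)) => _ [i _].
  rewrite /sigma /sigmainv -!comp_assoc (comp_assoc (castm (e1 A))) castm_inv2 comp_idl.
  by rewrite (comp_assoc (P (K A))) i comp_idl castm_inv2.
have siso2 A : sigmainv A \oc sigma A = cid _.
  case: (hPQ (K A)) => _ [_ j].
  rewrite /sigma /sigmainv -!comp_assoc (comp_assoc (castm (esym (e2 A)))) castm_inv1 comp_idl.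
  by rewrite (comp_assoc (Q (K A))) j comp_idl castm_inv1.
have riso1 A : rho A \oc rhoinv A = cid _.
  rewrite /rho /rhoinv foldmor_comp -[RHS](foldmor_id _ ts); congr foldmor.
  by apply: functional_extensionality_dep => t; rewrite -Fmor_comp eta_iso1 ?Fmor_id.
have riso2 A : rhoinv A \oc rho A = cid _.
  rewrite /rho /rhoinv foldmor_comp -[RHS](foldmor_id _ ts); congr foldmor.
  by apply: functional_extensionality_dep => t; rewrite -Fmor_comp eta_iso2 ?Fmor_id.
have snat A B (f : hom A B) : sigma B \oc Fmor (phi g) (FoldMor phi ts f)
    = foldmor ts (fun t => Fmor (phi t) (Fmor (phi (hr t)) f)) \oc sigma A.
  rewrite /sigma -!comp_assoc (cnatE (c1 A B f)) (comp_assoc (P (K B))) nP.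
  rewrite !comp_assoc (cnatE (c2 A B f)) //.
have sst A : structural (sigma A).
  case: (hPQ (K A)) => st _; apply: st_comp; [apply: st_comp => //|]; exact: st_cast.
clearbody sigma sigmainv.
exists (fun A => rho A \oc sigma A), (fun A => sigmainv A \oc rhoinv A); split.
  move=> A; split.
    by rewrite -comp_assoc (comp_assoc (sigma A)) siso1 comp_idl riso1.
  by rewrite -comp_assoc (comp_assoc (rhoinv A)) riso2 comp_idl siso2.
split.
  by move=> A; exists (sigma A); split.
move=> A B f hf; cbv beta.
rewrite -!comp_assoc (comp_assoc (sigma B)) snat -!comp_assoc (comp_assoc (sigma A)) siso1 comp_idl.
rewrite /rho /rhoinv !foldmor_comp; congr foldmor.
apply: functional_extensionality_dep => t; rewrite -!Fmor_comp.
by rewrite (hf _ (hrH t)) comp_assoc (eta_iso1 _ _ (hrH t)) comp_idl.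
Qed.
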